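(* Let $\Lambda$ be a selfinjective artin algebra of infinite representation type with $\operatorname{rad}^3\Lambda=0$, let $A=\Lambda/\operatorname{Soc}\Lambda$, and let $F\colon\operatorname{mod}A\to\operatorname{mod}H$ be the functor described in the context. Let $0\to C\xrightarrow{\alpha}B\xrightarrow{\beta}S\to 0$ be a short exact sequence in $\operatorname{mod}A$ with $S$ a simple $\Lambda$-module. If $C$ does not contain any simple direct summand, then the sequence $0\to F(C)\to F(B)\to F(S)\to 0$ is also exact.
   Context: Here $\operatorname{rad}^2A=0$. Let $\mathfrak r_A$ be the radical of $A$ and $\bar A=A/\mathfrak r_A$. $H$ is the hereditary triangular matrix algebra $H=\begin{pmatrix}\bar A&0\\ \mathfrak r_A&\bar A\end{pmatrix}$, whose modules are triples $(U,V,f)$ with $U,V$ $\bar A$-modules and $f\colon \mathfrak r_A\otimes_{\bar A}U\to V$ an $\bar A$-homomorphism. The functor $F$ sends an $A$-module $X$ to $(X/\mathfrak r_AX,\ \mathfrak r_AX,\ f_X)$ where $f_X$ is induced by multiplication, and acts on morphisms by the induced maps; it induces an equivalence of stable categories $\underline{\operatorname{mod}}A\simeq\underline{\operatorname{mod}}H$. A sequence of $H$-modules $(U_i,V_i,f_i)$ is exact iff the sequences of $U$-components and of $V$-components are exact. *)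

(* Defs.v *)
From HB Require Import structures.
From mathcomp Require Import all_boot all_order all_algebra.
Set Implicit Arguments. Unset Strict Implicit. Unset Printing Implicit Defensive.
Import GRing.Theory.
Local Open Scope ring_scope.

Section ModuleNotions.
Variable L : nzRingType.

Definition lin (M N : lmodType L) (f : M -> N) : Prop :=
  forall (a : L) (x y : M), f (a *: x + y) = a *: f x + f y.

Definition submod (M : lmodType L) (P : M -> Prop) : Prop :=
  P 0 /\ (forall (a : L) (x y : M), P x -> P y -> P (a *: x + y)).

Definition fingen (M : lmodType L) : Prop :=
  exists s : seq M, forall x : M, exists c : seq L,
    x = \sum_(i < size s) c`_i *: s`_i.

Definition simple_sub (M : lmodType L) (U : M -> Prop) : Prop :=
  [/\ submod U, (exists x, U x /\ x <> 0) &
      forall W : M -> Prop, submod W -> (forall x, W x -> U x) ->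
        (forall x, W x -> x = 0) \/ (forall x, U x -> W x)].

Definition simple_mod (M : lmodType L) : Prop := simple_sub (fun _ : M => True).

Definition dsum (M : lmodType L) (U V : M -> Prop) : Prop :=
  (forall x : M, exists u v, [/\ U u, V v & x = u + v]) /\
  (forall x : M, U x -> V x -> x = 0).

Definition indecomposable (M : lmodType L) : Prop :=
  (exists x : M, x <> 0) /\
  forall U V : M -> Prop, submod U -> submod V -> dsum U V ->
    (forall x, U x -> x = 0) \/ (forall x, V x -> x = 0).

Definition has_simple_summand (M : lmodType L) : Prop :=
  exists U V : M -> Prop, [/\ submod U, submod V, dsum U V & simple_sub U].

Definition mod_iso (M N : lmodType L) : Prop :=
  exists f : M -> N, lin f /\ bijective f.

Definition injective_mod (Q : lmodType L) : Prop :=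
  forall (M N : lmodType L) (f : M -> N) (g : M -> Q),
    lin f -> injective f -> lin g ->
    exists h : N -> Q, lin h /\ forall x, h (f x) = g x.

Definition left_ideal (I : L -> Prop) : Prop :=
  [/\ I 0, (forall x y, I x -> I y -> I (x + y)) & (forall a x, I x -> I (a * x))].

Definition maximal_left_ideal (I : L -> Prop) : Prop :=
  [/\ left_ideal I, ~ I 1 &
      forall J, left_ideal J -> (forall x, I x -> J x) ->
        (forall x, J x -> I x) \/ J 1].

Definition minimal_left_ideal (I : L -> Prop) : Prop :=
  [/\ left_ideal I, (exists x, I x /\ x <> 0) &
      forall J, left_ideal J -> (forall x, J x -> I x) ->
        (forall x, J x -> x = 0) \/ (forall x, I x -> J x)].

Definition jrad (x : L) : Prop := forall I, maximal_left_ideal I -> I x.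

(* rad^3 L = 0 : all products of three radical elements vanish
   (equivalently, the ideal they generate is zero) *)
Definition rad3_zero : Prop :=
  forall x y z, jrad x -> jrad y -> jrad z -> x * y * z = 0.

Definition soc (x : L) : Prop :=
  exists s : seq L, x = \sum_(y <- s) y /\
    forall y, y \in s -> exists I, minimal_left_ideal I /\ I y.

(* Lifts to L of the radical of A = L / Soc L : intersection of the maximal
   left ideals of L containing Soc L (these correspond to the maximal left
   ideals of A). *)
Definition radA (x : L) : Prop :=
  forall I, maximal_left_ideal I -> (forall s, soc s -> I s) -> I x.

(* A-modules (A = L / Soc L) are the L-modules annihilated by Soc L;
   mod A = finitely generated ones. *)
Definition modA (M : lmodType L) : Prop :=
  fingen M /\ forall (s : L) (x : M), soc s -> s *: x = 0.

Definition rA (M : lmodType L) (x : M) : Prop :=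
  exists s : seq (L * M), x = \sum_(p <- s) p.1 *: p.2 /\
    forall p, p \in s -> radA p.1.

Definition ses (C B S : lmodType L) (a : C -> B) (b : B -> S) : Prop :=
  [/\ lin a, lin b, injective a, (forall s, exists y, b y = s) &
      forall y, b y = 0 <-> exists c, y = a c].

(* Exactness of 0 -> F(C) -> F(B) -> F(S) -> 0, where
   F(X) = (X / r_A X, r_A X, f_X).  By the context, a sequence of H-modules is
   exact iff its U-components and V-components are exact; here:
   - U-components: 0 -> C/r_A C -> B/r_A B -> S/r_A S -> 0 (induced maps),
   - V-components: 0 -> r_A C -> r_A B -> r_A S -> 0 (restricted maps). *)
Definition F_seq_exact (C B S : lmodType L) (a : C -> B) (b : B -> S) : Prop :=
  [/\ forall c, rA (a c) -> rA c,
      forall y, rA (b y) <-> exists c, rA (y - a c) &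
      forall s, exists y, rA (s - b y)] /\
  [/\ (forall c, rA c -> rA (a c)) /\ (forall y, rA y -> rA (b y)),
      forall c, rA c -> a c = 0 -> c = 0,
      forall y, rA y -> (b y = 0 <-> exists c, rA c /\ a c = y) &
      forall s, rA s -> exists y, rA y /\ b y = s].

End ModuleNotions.

Definition artinian_ring (R : nzRingType) : Prop :=
  forall I : nat -> R -> Prop, (forall n, left_ideal (I n)) ->
    (forall n x, I n.+1 x -> I n x) ->
    exists n, forall m, (n <= m)%N -> forall x, I n x -> I m x.

Definition artin_algebra (L : nzRingType) : Prop :=
  exists (R : comNzRingType) (phi : R -> L),
  [/\ artinian_ring R, phi 1 = 1,
      (forall x y, phi (x + y) = phi x + phi y) /\
      (forall x y, phi (x * y) = phi x * phi y),
      (forall r a, phi r * a = a * phi r) &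
      exists s : seq L, forall x : L, exists c : seq R,
        x = \sum_(i < size s) phi c`_i * s`_i].

Definition selfinjective (L : nzRingType) : Prop := injective_mod L^o.

Definition inf_rep_type (L : nzRingType) : Prop :=
  exists M : nat -> lmodType L,
    (forall n, fingen (M n) /\ indecomposable (M n)) /\
    (forall m n, m <> n -> ~ mod_iso (M m) (M n)).

(* Main.v *)
Require Import Defs.
From HB Require Import structures.
From mathcomp Require Import all_boot all_order all_algebra.
From Stdlib Require Import Classical ClassicalEpsilon.
From mathcomp Require Import zify.
From Stdlib Require Import Lia.
Set Implicit Arguments. Unset Strict Implicit. Unset Printing Implicit Defensive.
Import GRing.Theory.
Local Open Scope ring_scope.

Section Gen.
Variable L : nzRingType.

Section Mod.
Variable M : lmodType L.
Implicit Types (P Q N E W : M -> Prop) (x y z t : M).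

Lemma sm0 P : submod P -> P 0. Proof. by case. Qed.
Lemma smD P x y : submod P -> P x -> P y -> P (x + y).
Proof. by case=> _ H Px Py; have := H 1 x y Px Py; rewrite scale1r. Qed.
Lemma smZ P a x : submod P -> P x -> P (a *: x).
Proof. by move=> [H0 H] Px; have := H a x 0 Px H0; rewrite addr0. Qed.
Lemma smN P x : submod P -> P x -> P (- x).
Proof. by move=> sP Px; rewrite -scaleN1r; apply: smZ. Qed.
Lemma smB P x y : submod P -> P x -> P y -> P (x - y).
Proof. by move=> sP Px Py; apply: smD => //; apply: smN. Qed.
Lemma smSum P (I : eqType) (r : seq I) (F : I -> M) :
  submod P -> (forall i, i \in r -> P (F i)) -> P (\sum_(i <- r) F i).
Proof.
move=> sP H; rewrite big_seq; apply: (big_ind P) => //.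
- exact: sm0.
- by move=> *; apply: smD.
Qed.

Definition psum P Q x := exists p q, [/\ P p, Q q & x = p + q].
Definition cyc t x := exists l : L, x = l *: t.

Lemma sm_psum P Q : submod P -> submod Q -> submod (psum P Q).
Proof.
move=> sP sQ; split; first by exists 0, 0; rewrite addr0; split => //; apply: sm0.
move=> a x y [p [q [Pp Qq ->]]] [p' [q' [Pp' Qq' ->]]].
exists (a *: p + p'), (a *: q + q'); split.
- by apply: smD => //; apply: smZ.
- by apply: smD => //; apply: smZ.
- by rewrite scalerDr -!addrA; congr (_ + _); rewrite addrCA.
Qed.

Lemma sm_cyc t : submod (cyc t).
Proof.
split; first by exists 0; rewrite scale0r.
by move=> a x y [l ->] [l' ->]; exists (a * l + l'); rewrite scalerDl scalerA.
Qed.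

Lemma psumL P Q x : submod Q -> P x -> psum P Q x.
Proof. by move=> sQ Px; exists x, 0; rewrite addr0; split => //; apply: sm0. Qed.
Lemma psumR P Q x : submod P -> Q x -> psum P Q x.
Proof. by move=> sP Qx; exists 0, x; rewrite add0r; split => //; apply: sm0. Qed.

Fixpoint lspan (ts : seq M) : M -> Prop :=
  match ts with
  | [::] => fun x => x = 0
  | t :: ts' => fun x => exists (l : L) y, lspan ts' y /\ x = l *: t + y
  end.

Lemma sm_lspan ts : submod (lspan ts).
Proof.
elim: ts => [|t ts IH] /=; first by split=> // a x y -> ->; rewrite scaler0 addr0.
split; first by exists 0, 0; rewrite scale0r addr0; split => //; apply: sm0.
move=> a x y [l [u [Hu ->]]] [l' [u' [Hu' ->]]].
exists (a * l + l'), (a *: u + u'); split; first by apply: smD => //; apply: smZ.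
rewrite scalerDr scalerDl scalerA -!addrA; congr (_ + _); by rewrite addrCA.
Qed.

Lemma lspan_mem ts t : t \in ts -> lspan ts t.
Proof.
elim: ts => [|s ts IH] //=; rewrite inE => /orP [/eqP ->|/IH H].
  by exists 1, 0; rewrite scale1r addr0; split => //; apply: sm0 (sm_lspan ts).
by exists 0, t; rewrite scale0r add0r.
Qed.

Definition rs N t := exists K : L -> Prop, maximal_left_ideal K /\
  forall l, K l -> N (l *: t).

Lemma rsP N t E (l : L) : submod E -> (forall x, N x -> E x) -> rs N t ->
  E (l *: t) -> N (l *: t) \/ E t.
Proof.
move=> sE NE [K [[[K0 KD KM] K1 Kmax] KN]] El.
pose T := fun l : L => E (l *: t).
have lT : left_ideal T.
  split; rewrite /T.
  - by rewrite scale0r; apply: sm0.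
  - by move=> k k2 Ex Ey; rewrite scalerDl; apply: smD.
  - by move=> a k Ex; rewrite -scalerA; apply: smZ.
have [H|H] := Kmax T lT (fun (k : L) Kk => NE _ (KN k Kk)).
  by left; apply: KN; apply: H.
by right; move: H; rewrite /T scale1r.
Qed.

Lemma complement N P (ts : seq M) :
  submod N -> submod P -> (forall x, N x -> P x) ->
  (forall t, t \in ts -> rs N t) ->
  exists Q, [/\ submod Q, (forall x, N x -> Q x),
    (forall x, P x -> Q x -> N x) & forall y, lspan ts y -> psum P Q y].
Proof.
move=> sN sP NP; elim: ts => [|t ts IH] Hts.
  exists N; split => //.
  by move=> y /= ->; exists 0, 0; rewrite addr0; split => //; apply: sm0.
have [Q0 [sQ0 NQ0 PQ0 cov0]] : exists Q, [/\ submod Q, (forall x, N x -> Q x),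
    (forall x, P x -> Q x -> N x) & forall y, lspan ts y -> psum P Q y].
  by apply: IH => t' Ht'; apply: Hts; rewrite inE Ht' orbT.
have sE := sm_psum sP sQ0.
case: (classic (psum P Q0 t)) => Ht.
  exists Q0; split => // y /= [l [u [Hu ->]]].
  by apply: smD => //; [apply: smZ | apply: cov0].
exists (psum Q0 (cyc t)); split.
- exact: sm_psum (sm_cyc t).
- by move=> x Nx; apply: psumL (sm_cyc t) _; apply: NQ0.
- move=> x Px [q [w [Qq [l ->] Hx]]].
  have E1 : psum P Q0 (l *: t).
    have -> : l *: t = x - q by rewrite Hx addrC addKr.
    apply: smB => //; [exact: psumL | exact: psumR].
  have rst : rs N t by apply: Hts; rewrite inE eqxx.
  have [Nl|] := rsP sE (fun x Nx => psumR sP (NQ0 x Nx)) rst E1; last by [].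
  apply: PQ0 => //; rewrite Hx; apply: smD => //; exact: NQ0.
- move=> y /= [l [u [Hu ->]]].
  have [p [q [Pp Qq ->]]] := cov0 u Hu.
  exists p, (q + l *: t); split => //.
    apply: smD; first exact: sm_psum (sm_cyc t).
      exact: psumL (sm_cyc t) _.
    by apply: psumR sQ0 _; exists l.
  by rewrite addrC -addrA.
Qed.

End Mod.

Section Ring.
Implicit Types (I m K : L -> Prop) (x y : L).

Lemma li0 I : left_ideal I -> I 0. Proof. by case. Qed.
Lemma liD I x y : left_ideal I -> I x -> I y -> I (x + y). Proof. by case=> _ H _; apply: H. Qed.
Lemma liM I a x : left_ideal I -> I x -> I (a * x). Proof. by case=> _ _ H; apply: H. Qed.
Lemma liN I x : left_ideal I -> I x -> I (- x).
Proof. by move=> lI Ix; rewrite -mulN1r; apply: liM. Qed.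
Lemma liB I x y : left_ideal I -> I x -> I y -> I (x - y).
Proof. by move=> lI Ix Iy; apply: liD => //; apply: liN. Qed.
Lemma li1 I x : left_ideal I -> I 1 -> I x.
Proof. by move=> lI I1; rewrite -(mulr1 x); apply: liM. Qed.
Lemma liSum I (J : eqType) (r : seq J) (F : J -> L) :
  left_ideal I -> (forall i, i \in r -> I (F i)) -> I (\sum_(i <- r) F i).
Proof.
move=> lI H; rewrite big_seq; apply: (big_ind I) => //.
- exact: li0.
- by move=> *; apply: liD.
Qed.

Lemma max_one m u z : maximal_left_ideal m -> ~ m u ->
  exists t v, m v /\ z = t * u + v.
Proof.
move=> [lm m1 mmax] mu.
pose J := fun z => exists t v, m v /\ z = t * u + v.
have lJ : left_ideal J.
  split.
  - by exists 0, 0; rewrite mul0r addr0; split => //; apply: li0.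
  - move=> _ _ [t [v [mv ->]]] [t' [v' [mv' ->]]].
    exists (t + t'), (v + v'); split; first exact: liD.
    by rewrite mulrDl -!addrA; congr (_ + _); rewrite addrCA.
  - move=> a _ [t [v [mv ->]]]; exists (a * t), (a * v); split; first exact: liM.
    by rewrite mulrDr mulrA.
have inc : forall x, m x -> J x by move=> x mx; exists 0, x; rewrite mul0r add0r.
have [H|H] := mmax J lJ inc.
  by exfalso; apply: mu; apply: H; exists 1, 0; rewrite mul1r addr0; split => //; apply: li0.
exact: (@li1 J z lJ H).
Qed.

Lemma ann_max m x : maximal_left_ideal m -> ~ m x ->
  maximal_left_ideal (fun l => m (l * x)).
Proof.
move=> mm mx; have [lm m1 mmax] := mm.
split.
- split; first by rewrite mul0r; apply: li0.
  + by move=> a b Ha Hb; rewrite mulrDl; apply: liD.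
  + by move=> a b Hb; rewrite -mulrA; apply: liM.
- by rewrite mul1r.
- move=> J lJ KJ; case: (classic (forall z, J z -> m (z * x))) => H; first by left.
  right; move: H => /not_all_ex_not [l Hl].
  have Jl := not_imply_elim _ _ Hl; have nl := not_imply_elim2 _ _ Hl.
  have [t [v [mv e2]]] := max_one x mm nl.
  have hK : m ((1 - (t * l)) * x).
    by rewrite mulrBl mul1r -mulrA {1}e2 addrC addKr.
  have := liD lJ (KJ _ hK) (liM t lJ Jl).
  by rewrite subrK.
Qed.

Lemma jrad_mulr j x : jrad j -> jrad (j * x).
Proof.
move=> Hj m mm; case: (classic (m x)) => mx.
  by have [lm _ _] := mm; apply: liM.
exact: (Hj _ (ann_max mm mx)).
Qed.

Lemma jrad_radA x : jrad x -> radA x.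
Proof. by move=> H I mI _; apply: H. Qed.

Lemma radA_li : left_ideal (@radA L).
Proof.
split.
- by move=> I [lI _ _] _; apply: li0.
- by move=> x y Hx Hy I mI sI; have [lI _ _] := mI; apply: (liD lI); [apply: Hx|apply: Hy].
- by move=> a x Hx I mI sI; have [lI _ _] := mI; apply: (liM _ lI); apply: Hx.
Qed.

Lemma jrad_li : left_ideal (@jrad L).
Proof.
split.
- by move=> I [lI _ _]; apply: li0.
- by move=> x y Hx Hy I mI; have [lI _ _] := mI; apply: (liD lI); [apply: Hx|apply: Hy].
- by move=> a x Hx I mI; have [lI _ _] := mI; apply: (liM _ lI); apply: Hx.
Qed.

End Ring.

Lemma decr_le (T : Type) (P : nat -> T -> Prop) : (forall n x, P n.+1 x -> P n x) ->
  forall n m x, (n <= m)%N -> P m x -> P n x.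
Proof.
move=> H n m x /subnKC <-; elim: (m - n)%N => [|k IH]; first by rewrite addn0.
by rewrite addnS => /H /IH.
Qed.

Section DCC.
Variables (R : comNzRingType) (phi : R -> L).
Hypotheses (art : artinian_ring R) (phi1 : phi 1 = 1)
  (phiD : forall x y, phi (x + y) = phi x + phi y)
  (phiM : forall x y, phi (x * y) = phi x * phi y).

Lemma phi0 : phi 0 = 0.
Proof. by apply: (addrI (phi 0)); rewrite addr0 -phiD addr0. Qed.
Lemma phiN r : phi (- r) = - phi r.
Proof. by apply: (addrI (phi r)); rewrite -phiD !subrr phi0. Qed.

Definition Rsub (P : L -> Prop) := [/\ P 0, (forall x y, P x -> P y -> P (x + y)) &
  (forall r x, P x -> P (phi r * x))].

Lemma RsubB P x y : Rsub P -> P x -> P y -> P (x - y).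
Proof.
move=> [P0 PD PM] Px Py; apply: PD => //.
by rewrite -mulN1r -phi1 -phiN; apply: PM.
Qed.

Fixpoint spanR (gs : seq L) : L -> Prop :=
  match gs with
  | [::] => fun x => x = 0
  | g :: gs' => fun x => exists r y, spanR gs' y /\ x = phi r * g + y
  end.

Lemma Rsub_span gs : Rsub (spanR gs).
Proof.
elim: gs => [|g gs [S0 SD SM]] /=.
  by split => // [x y -> ->|r x ->]; rewrite ?addr0 ?mulr0.
split.
- by exists 0, 0; rewrite phi0 mul0r addr0.
- move=> _ _ [r [y [Hy ->]]] [r' [y' [Hy' ->]]]; exists (r + r'), (y + y'); split; first exact: SD.
  by rewrite phiD mulrDl -!addrA; congr (_ + _); rewrite addrCA.
- move=> a _ [r [y [Hy ->]]]; exists (a * r), (phi a * y); split; first exact: SM.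
  by rewrite mulrDr phiM mulrA.
Qed.

Lemma dcc_span gs : forall P : nat -> L -> Prop, (forall n, Rsub (P n)) ->
  (forall n x, P n.+1 x -> P n x) -> (forall n x, P n x -> spanR gs x) ->
  exists N, forall m, (N <= m)%N -> forall x, P N x -> P m x.
Proof.
elim: gs => [|g gs IH] P sP dP Ps.
  exists 0%N => m _ x /Ps /= ->; by case: (sP m).
pose I := fun n (r : R) => exists y, spanR gs y /\ P n (phi r * g + y).
pose Q := fun n x => P n x /\ spanR gs x.
have [S0 SD SM] := Rsub_span gs.
have lI : forall n, left_ideal (I n).
  move=> n; have [P0 PD PM] := sP n; split.
  - by exists 0; rewrite phi0 mul0r addr0.
  - move=> r r' [y [Hy Py]] [y' [Hy' Py']]; exists (y + y'); split; first exact: SD.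
    by rewrite phiD mulrDl addrACA; apply: PD.
  - move=> a r [y [Hy Py]]; exists (phi a * y); split; first exact: SM.
    by rewrite phiM -mulrA -mulrDr; apply: PM.
have dI : forall n r, I n.+1 r -> I n r.
  by move=> n r [y [Hy Py]]; exists y; split => //; apply: dP.
have [N1 HN1] := art lI dI.
have [N2 HN2] : exists N, forall m, (N <= m)%N -> forall x, Q N x -> Q m x.
  apply: IH.
  - move=> n; have [P0 PD PM] := sP n; split.
    + by split.
    + by move=> x y [? ?] [? ?]; split; [apply: PD | apply: SD].
    + by move=> r x [? ?]; split; [apply: PM | apply: SM].
  - by move=> n x [? ?]; split => //; apply: dP.
  - by move=> n x [].
exists (maxn N1 N2) => m Hm x Px.
have /= [r [y [Hy ex]]] := Ps _ _ Px.
have IN : I (maxn N1 N2) r by exists y; rewrite -ex.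
have IN1 : I N1 r by apply: (decr_le dI (leq_maxl N1 N2) IN).
have [y' [Hy' Pm]] := HN1 m (leq_trans (leq_maxl _ _) Hm) r IN1.
have Pm' : P (maxn N1 N2) (phi r * g + y') := decr_le dP Hm Pm.
have Qd : Q (maxn N1 N2) (y - y').
  split; last by apply: RsubB => //; exact: Rsub_span.
  have -> : y - y' = x - (phi r * g + y') by rewrite ex opprD addrACA subrr add0r.
  exact: RsubB.
have QN2 : Q N2 (y - y') by apply: (decr_le (P := Q)) Qd; [move=> n z [? ?]; split => //; apply: dP | apply: leq_maxr].
have [Qm _] := HN2 m (leq_trans (leq_maxr _ _) Hm) _ QN2.
have -> : x = (phi r * g + y') + (y - y') by rewrite ex -addrA (addrC y') subrK.
by have [_ PD _] := sP m; apply: PD.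
Qed.

End DCC.

Lemma dcc_L : artin_algebra L -> forall I : nat -> L -> Prop,
  (forall n, left_ideal (I n)) -> (forall n x, I n.+1 x -> I n x) ->
  exists N, forall x, I N x -> I N.+1 x.
Proof.
move=> [R [phi [art phi1 [phiD phiM] _ [s Hs]]]] I lI dI.
have sp : forall x, spanR phi s x.
  move=> x; have [c ->] := Hs x; clear Hs; elim: s c => [|g gs IH] c /=.
    by rewrite big_ord0.
  rewrite big_ord_recl /=; exists c`_0.
  exists (\sum_(i < size gs) phi (behead c)`_i * gs`_i); split; first exact: IH.
  by congr (_ + _); apply: eq_bigr => i _; rewrite nth_behead.
have sI : forall n, Rsub phi (I n).
  by move=> n; have [I0 ID IM] := lI n; split => // r x; exact: IM.
have [N HN] := dcc_span art phi1 phiD phiM sI dI (fun n x _ => sp x).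
by exists N => x; apply: HN.
Qed.


Definition FI (P : L -> Prop) := exists n (m : nat -> L -> Prop),
  (forall i, (i < n)%N -> maximal_left_ideal (m i)) /\
  forall x, P x <-> (forall i, (i < n)%N -> m i x).

Lemma FI_li P : FI P -> left_ideal P.
Proof.
move=> [n [m [Hm HP]]]; split.
- by apply/HP => i Hi; have [lm _ _] := Hm i Hi; apply: li0.
- move=> x y /HP Hx /HP Hy; apply/HP => i Hi; have [lm _ _] := Hm i Hi.
  exact: (liD lm (Hx i Hi) (Hy i Hi)).
- move=> a x /HP Hx; apply/HP => i Hi; have [lm _ _] := Hm i Hi.
  exact: (liM _ lm (Hx i Hi)).
Qed.

Lemma finrep : artin_algebra L -> exists n (m : nat -> L -> Prop),
  (forall i, (i < n)%N -> maximal_left_ideal (m i)) /\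
  forall x, (forall i, (i < n)%N -> m i x) -> jrad x.
Proof.
move=> hart; apply: NNPP => Hno.
have H1 : forall P : L -> Prop, exists M' : L -> Prop, FI P ->
    maximal_left_ideal M' /\ ~ (forall x, P x -> M' x).
  move=> P; case: (classic (FI P)) => [[n [m [Hm HP]]]|nF]; last by exists P.
  have : ~ (forall x, (forall i, (i < n)%N -> m i x) -> jrad x).
    by move=> H; apply: Hno; exists n, m.
  move=> /not_all_ex_not [x Hx].
  have Px : P x by apply/HP; exact: (not_imply_elim _ _ Hx).
  have /not_all_ex_not [I HI] := not_imply_elim2 _ _ Hx.
  exists I => _; split; first exact: (not_imply_elim _ _ HI).
  by move=> H; apply: (not_imply_elim2 _ _ HI); apply: H.
pose g := fun P => proj1_sig (constructive_indefinite_description _ (H1 P)).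
have Hg : forall P, FI P -> maximal_left_ideal (g P) /\ ~ (forall x, P x -> g P x).
  by move=> P; rewrite /g; case: constructive_indefinite_description.
pose fix ch k : L -> Prop := match k with
  | 0 => fun _ => True
  | k'.+1 => fun x => ch k' x /\ g (ch k') x end.
have FIch : forall k, FI (ch k).
  elim=> [|k IH].
    by exists 0%N, (fun _ _ => True); split.
  have [gmax gn] := Hg _ IH.
  move: IH => [n [m [Hm HP]]].
  exists n.+1, (fun i => if (i < n)%N then m i else g (ch k)); split.
    by move=> i Hi; case: ifP => // ?; apply: Hm.
  move=> x /=; split.
    move=> [/HP Hx Gx] i Hi; case: ifP => // ?; exact: Hx.
  move=> H; split; last by have := H n (ltnSn n); rewrite ltnn.
  apply/HP => i Hi; have := H i (ltnW (leq_trans Hi (leqnn _))).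
  by rewrite Hi.
have [N HN] := dcc_L hart (fun k => FI_li (FIch k)) (fun k x (H : ch k.+1 x) => proj1 H).
have [_ gn] := Hg _ (FIch N).
by apply: gn => x /HN [].
Qed.


Definition rep n (m : nat -> L -> Prop) :=
  (forall i, (i < n)%N -> maximal_left_ideal (m i)) /\
  forall x, (forall i, (i < n)%N -> m i x) -> jrad x.

Definition irr n (m : nat -> L -> Prop) := forall i, (i < n)%N ->
  exists w, (forall j, (j < n)%N -> j <> i -> m j w) /\ ~ m i w.

Lemma irred_aux N : forall n m, (n <= N)%N -> rep n m ->
  exists n' m', rep n' m' /\ irr n' m'.
Proof.
elim: N => [|N IH] n m Hn Hr.
  by exists n, m; split => // i Hi; exfalso; lia.
case: (classic (irr n m)) => Hi; first by exists n, m.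
move: Hi => /not_all_ex_not [i Hi].
have Hin := not_imply_elim _ _ Hi; have Hred0 := not_imply_elim2 _ _ Hi.
have Hred : forall w, (forall j, (j < n)%N -> j <> i -> m j w) -> m i w.
  move=> w Hw; apply: NNPP => nw; apply: Hred0; by exists w.
clear Hi Hred0; case: n Hn Hr Hin Hred => [|n'] Hn [Hmax Hjr] Hin Hred; first by exfalso; lia.
pose m' := fun j => if (j < i)%N then m j else m j.+1.
have Hall : forall x, (forall j, (j < n')%N -> m' j x) -> forall j, (j < n'.+1)%N -> m j x.
  move=> x Hx.
  have Hne : forall j, (j < n'.+1)%N -> j <> i -> m j x.
    move=> j Hj Hji; case: (ltnP j i) => Hji'.
      by have := Hx j ltac:(lia); rewrite /m' Hji'.
    have := Hx j.-1 ltac:(lia); rewrite /m'.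
    have -> : (j.-1 < i)%N = false by apply/negbTE; rewrite -leqNgt; lia.
    by have -> : j.-1.+1 = j by lia.
  move=> j Hj; case: (eqVneq j i) => [->|Hji]; first exact: Hred.
  by apply: Hne => // E; rewrite E eqxx in Hji.
apply: (IH n' m') => //.
split.
  move=> j Hj; rewrite /m'; case: ifP => Hji; apply: Hmax; lia.
by move=> x Hx; apply: Hjr; apply: Hall.
Qed.

Lemma pairs : artin_algebra L -> exists n (a : nat -> L) (K : nat -> L -> Prop),
  (forall i, (i < n)%N -> maximal_left_ideal (K i) /\ forall l, K i l -> jrad (l * a i)) /\
  jrad (1 - \sum_(i < n) a i).
Proof.
move=> /finrep [n0 [m0 Hr0]].
have [n [m [[Hmax Hjr] Hirr]]] := irred_aux (leqnn n0) Hr0.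
have H1 : forall i, exists a : L, (i < n)%N ->
    (forall j, (j < n)%N -> j <> i -> m j a) /\ m i (1 - a).
  move=> i; case: (ltnP i n) => Hi; last by exists 0.
  have [w [Hw nw]] := Hirr i Hi.
  have [t [v [mv e]]] := max_one 1 (Hmax i Hi) nw.
  exists (t * w) => _; split.
    by move=> j Hj Hji; have [lm _ _] := Hmax j Hj; apply: (liM _ lm); apply: Hw.
  by rewrite e addrC addKr.
pose a := fun i => proj1_sig (constructive_indefinite_description _ (H1 i)).
have Ha : forall i, (i < n)%N ->
    (forall j, (j < n)%N -> j <> i -> m j (a i)) /\ m i (1 - a i).
  by move=> i; rewrite /a; case: constructive_indefinite_description.
exists n, a, (fun i l => m i (l * a i)); split.
  move=> i Hi; have [Ha1 Ha2] := Ha i Hi; have [lm m1 _] := Hmax i Hi; split.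
    apply: ann_max; first exact: Hmax i Hi.
    move=> mi; apply: m1.
    by have := liD lm Ha2 mi; rewrite subrK.
  move=> l Hl; apply: Hjr => j Hj; case: (eqVneq j i) => [->//|Hji].
  have [lmj _ _] := Hmax j Hj; apply: (liM _ lmj); apply: Ha1 => // E.
  by rewrite E eqxx in Hji.
apply: Hjr => k Hk; have [lm _ _] := Hmax k Hk.
rewrite (bigD1 (Ordinal Hk)) //= opprD addrA; apply: (liB lm); first exact: (Ha k Hk).2.
apply: (big_ind (m k)); first exact: li0.
  by move=> x y; apply: liD.
move=> i Hik; have [Ha1 _] := Ha i (ltn_ord i); apply: Ha1 => // E.
by move: Hik; rewrite -(inj_eq val_inj) /= E eqxx.
Qed.


Lemma soc0 : soc (0 : L).
Proof. by exists [::]; rewrite big_nil. Qed.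
Lemma socD (x y : L) : soc x -> soc y -> soc (x + y).
Proof.
move=> [s [-> Hs]] [s' [-> Hs']]; exists (s ++ s'); rewrite big_cat; split => // z.
by rewrite mem_cat => /orP [/Hs|/Hs'].
Qed.
Lemma socM (a x : L) : soc x -> soc (a * x).
Proof.
move=> [s [-> Hs]]; exists [seq a * y | y <- s]; rewrite big_map mulr_sumr; split => // z.
move=> /mapP [y /Hs [I [mI Iy]] ->]; exists I; split => //.
by have [lI _ _] := mI; apply: (liM _ lI).
Qed.
Lemma soc1 (I : L -> Prop) (y : L) : minimal_left_ideal I -> I y -> soc y.
Proof. by move=> mI Iy; exists [:: y]; rewrite big_seq1; split => // z; rewrite inE => /eqP ->; exists I. Qed.

Lemma li_sm (I : L -> Prop) : left_ideal I -> submod (M := L^o) I.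
Proof.
move=> lI; split; first exact: li0 lI.
move=> b x y Ix Iy; change (I (b * x + y)); exact: liD lI (liM b lI Ix) Iy.
Qed.
Lemma sm_li (I : L -> Prop) : submod (M := L^o) I -> left_ideal I.
Proof.
move=> sI; split; first exact: sm0 sI.
  by move=> x y Ix Iy; exact: (smD (M := L^o) sI Ix Iy).
by move=> b x Ix; exact: (smZ (M := L^o) b sI Ix).
Qed.

Lemma Qmax (N P Q : L -> Prop) (t : L) :
  submod (M := L^o) N -> rs (M := L^o) N t -> submod (M := L^o) Q ->
  (forall x, N x -> Q x) -> (forall x, P x -> Q x -> N x) ->
  P = psum (M := L^o) N (cyc (M := L^o) t) ->
  (forall y, psum (M := L^o) P Q y) -> ~ N t ->
  maximal_left_ideal Q /\ ~ Q t.
Proof.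
move=> sN rst sQ NQ PQ EP cov nt.
have Pt : P t by rewrite EP; apply: (psumR (M := L^o) sN); exists 1; rewrite scale1r.
have lQ := sm_li sQ.
have nQt : ~ Q t by move=> Qt; apply: nt; apply: PQ.
split => //; split => //.
  by move=> Q1; apply: nQt; rewrite -(mulr1 t); apply: (liM _ lQ).
move=> J lJ QJ; case: (classic (J t)) => Jt.
  right; have [p [q [Pp Qq E1]]] := cov 1.
  rewrite E1; apply: (liD lJ); last exact: QJ.
  move: Pp; rewrite EP => [[u [v [Nu [l ->] ->]]]].
  apply: (liD lJ); first by apply: QJ; apply: NQ.
  exact: (liM _ lJ Jt).
left => z Jz; have [p [q [Pp Qq E1]]] := cov z.
rewrite E1; apply: (smD (M := L^o) sQ) => //.
move: Pp; rewrite EP => [[u [v [Nu [l El] Ep]]]].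
have Jv : J v.
  have -> : v = z - q - u by rewrite E1 Ep addrK addrC addKr.
  apply: (liB lJ); last by apply: QJ; apply: NQ.
  by apply: (liB lJ) => //; apply: QJ.
have sJ := li_sm lJ.
have Jl : J (l *: (t : L^o)) by rewrite -El.
have [Nv|] := rsP (M := L^o) (l := l) sJ (fun x Nx => QJ _ (NQ _ Nx)) rst Jl.
  by rewrite Ep; apply: (smD (M := L^o) sQ); apply: NQ => //; rewrite El.
by [].
Qed.

Section RA.
Variable M : lmodType L.

Lemma sm_rA : submod (@rA L M).
Proof.
split; first by exists [::]; rewrite big_nil.
move=> b x y [s [-> Hs]] [s' [-> Hs']].
exists ([seq (b * p.1, p.2) | p <- s] ++ s'); split.
  rewrite big_cat big_map scaler_sumr; congr (_ + _).
  by apply: eq_bigr => p _; rewrite scalerA.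
move=> p; rewrite mem_cat => /orP [/mapP [q /Hs Hq ->]|/Hs'] //=.
by have [_ _ rM] := radA_li; apply: rM.
Qed.

Lemma rA1 (j : L) (m : M) : radA j -> rA (j *: m).
Proof. by move=> Hj; exists [:: (j, m)]; rewrite big_seq1; split => // p; rewrite inE => /eqP ->. Qed.

End RA.

Lemma lin0 (M N : lmodType L) (f : M -> N) : lin f -> f 0 = 0.
Proof.
move=> lf; have := lf 1 0 0; rewrite !scale1r addr0 => H.
by apply: (addrI (f 0)); rewrite addr0 -H.
Qed.
Lemma linD (M N : lmodType L) (f : M -> N) x y : lin f -> f (x + y) = f x + f y.
Proof. by move=> lf; have := lf 1 x y; rewrite !scale1r. Qed.
Lemma linZ (M N : lmodType L) (f : M -> N) a x : lin f -> f (a *: x) = a *: f x.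
Proof. by move=> lf; have := lf a x 0; rewrite !addr0 (lin0 lf) addr0. Qed.
Lemma linB (M N : lmodType L) (f : M -> N) x y : lin f -> f (x - y) = f x - f y.
Proof.
move=> lf; rewrite -scaleN1r -[in RHS]scaleN1r; rewrite (linD _ _ lf).
by rewrite (linZ _ _ lf).
Qed.
Lemma rA_lin (M N : lmodType L) (f : M -> N) x : lin f -> rA x -> rA (f x).
Proof.
move=> lf [s [-> Hs]]; exists [seq (p.1, f p.2) | p <- s]; split.
  rewrite big_map; elim: s {Hs} => [|p s IH]; first by rewrite !big_nil (lin0 lf).
  by rewrite !big_cons (linD _ _ lf) (linZ _ _ lf) IH.
by move=> p /mapP [q /Hs Hq ->].
Qed.

Section Pairs.
Variables (n : nat) (a : nat -> L) (K : nat -> L -> Prop).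
Hypothesis HK : forall i, (i < n)%N -> maximal_left_ideal (K i) /\ forall l, K i l -> jrad (l * a i).
Hypothesis Ha : jrad (1 - \sum_(i < n) a i).

Lemma jann_soc (x : L) : (forall l, jrad l -> l * x = 0) -> soc x.
Proof.
move=> Hx.
have -> : x = \sum_(i < n) a i * x.
  have := Hx _ Ha; rewrite mulrBl mul1r mulr_suml => /eqP; rewrite subr_eq0 => /eqP.
  by [].
apply: (big_ind (@soc L)); [exact: soc0 | exact: socD |].
move=> i _; have [Kmax Kj] := HK (ltn_ord i).
case: (eqVneq (a i * x) 0) => [->|nz]; first exact: soc0.
apply: (@soc1 (fun z => exists t, z = t * (a i * x))); last by exists 1; rewrite mul1r.
split.
- split; first by exists 0; rewrite mul0r.
  + by move=> _ _ [t ->] [t' ->]; exists (t + t'); rewrite mulrDl.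
  + by move=> b _ [t ->]; exists (b * t); rewrite mulrA.
- by exists (a i * x); split; [exists 1; rewrite mul1r | apply/eqP].
- move=> J lJ JI.
  pose T := fun l => J (l * (a i * x)).
  have lT : left_ideal T.
    split; rewrite /T; first by rewrite mul0r; apply: li0.
    + by move=> u v Hu Hv; rewrite mulrDl; apply: liD.
    + by move=> b u Hu; rewrite -mulrA; apply: (liM _ lJ).
  have KT : forall l, K i l -> T l.
    by move=> l Kl; rewrite /T mulrA (Hx _ (Kj _ Kl)); exact: li0 lJ.
  have [Kmx _ Kmm] := Kmax.
  case: (Kmm T lT KT) => [H|H].
    left => z Jz; have [t Et] := JI z Jz.
    have Tt : T t by rewrite /T -Et.
    by rewrite Et mulrA (Hx _ (Kj _ (H _ Tt))).
  by right => z [t ->]; apply: (liM _ lJ); move: H; rewrite /T mul1r.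
Qed.

Definition JS (z : L) := exists j s, [/\ jrad j, soc s & z = j + s].

Lemma sm_JS : submod (M := L^o) JS.
Proof.
have [j0 jD jM] := jrad_li.
split; first by exists 0, 0; rewrite addr0; split => //; exact: soc0.
move=> b _ _ [j [s [Hj Hs ->]]] [j' [s' [Hj' Hs' ->]]].
exists (b * j + j'), (b * s + s'); split.
- by apply: jD => //; apply: jM.
- by apply: socD => //; apply: socM.
- change (b * (j + s) + (j' + s') = b * j + j' + (b * s + s')).
  by rewrite mulrDr addrACA.
Qed.

Lemma radA_dec x : radA x -> JS x.
Proof.
move=> Hx; apply: NNPP => nx.
have sN := sm_JS; have lN := sm_li sN.
have [i [Hi nt]] : exists i, (i < n)%N /\ ~ JS (a i * x).
  apply: NNPP => H; apply: nx.
  have -> : x = \sum_(i < n) a i * x + (1 - \sum_(i < n) a i) * x.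
    by rewrite mulrBl mul1r mulr_suml addrC subrK.
  apply: (liD lN).
    apply: (big_ind JS); [exact: li0 lN | by move=> u v; apply: liD | ].
    move=> k _; apply: NNPP => nk; apply: H; exists k; split => //.
  exists ((1 - \sum_(i < n) a i) * x), 0; split; [exact: jrad_mulr | exact: soc0 | by rewrite addr0].
pose t : L^o := a i * x.
have [Kmax Kj] := HK Hi.
have rst : rs (M := L^o) JS t.
  exists (K i); split => // l Kl; exists (l * a i * x), 0; split.
  - exact: jrad_mulr (Kj _ Kl).
  - exact: soc0.
  - by rewrite addr0; change (l * (a i * x) = l * a i * x); rewrite mulrA.
pose P := psum (M := L^o) JS (cyc (M := L^o) t).
have sP : submod (M := L^o) P := sm_psum sN (sm_cyc t).
pose ts := [seq (a k : L^o) | k <- iota 0 n].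
have rts : forall t', t' \in ts -> rs (M := L^o) JS t'.
  move=> t' /mapP [k]; rewrite mem_iota add0n => /andP [_ Hk] ->.
  have [Kmk Kjk] := HK Hk.
  exists (K k); split => // l Kl; exists (l * a k), 0; split => //; [exact: Kjk | exact: soc0 | by rewrite addr0].
have [Q [sQ NQ PQ covl]] := complement sN sP (fun z Nz => psumL (sm_cyc t) Nz) rts.
have cov : forall y, psum (M := L^o) P Q y.
  move=> y.
  have -> : y = \sum_(k < n) y * a k + y * (1 - \sum_(k < n) a k).
    by rewrite mulrBr mulr1 mulr_sumr addrC subrK.
  apply: (smD (sm_psum sP sQ)).
    apply: covl; apply: (big_ind (lspan ts)); [exact: sm0 (sm_lspan ts) | by move=> u v; apply: smD (sm_lspan ts) | ].
    move=> k _; apply: (smZ (M := L^o) y (sm_lspan ts)); apply: lspan_mem.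
    by apply/mapP; exists (nat_of_ord k) => //; rewrite mem_iota add0n ltn_ord.
  apply: (psumL sQ); apply: (psumL (sm_cyc t)).
  exists (y * (1 - \sum_(k < n) a k)), 0; split; [ | exact: soc0 | by rewrite addr0].
  by have [_ _ jM] := jrad_li; apply: jM.
have [Qm nQt] := Qmax sN rst sQ NQ PQ (erefl P) cov nt.
apply: nQt; have [lQ _ _] := Qm; apply: (liM _ lQ); apply: Hx => // s Hs.
by apply: NQ; exists 0, s; rewrite add0r; split => //; exact: li0 jrad_li.
Qed.

Lemma factA (rad3 : rad3_zero L) (M : lmodType L) (m : M) j k :
  (forall s (y : M), soc s -> s *: y = 0) -> radA j -> radA k -> j *: (k *: m) = 0.
Proof.
move=> Hs /radA_dec [j1 [s1 [Hj1 Hs1 ->]]] /radA_dec [k1 [s2 [Hk1 Hs2 ->]]].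
have Hjk : soc (j1 * k1).
  by apply: jann_soc => l Hl; rewrite mulrA; apply: rad3.
by rewrite (scalerDl m k1 s2) (Hs s2 m) // addr0 scalerDl (Hs s1) // addr0 scalerA Hs.
Qed.

Lemma N3 (C : lmodType L) (d : C) : modA C -> ~ has_simple_summand C ->
  (forall j, radA j -> j *: d = 0) -> rA d.
Proof.
move=> [[g Hg] _] nss Hd; apply: NNPP => nd.
have sR := sm_rA C.
have Har := jrad_radA Ha.
have [i [Hi ny]] : exists i, (i < n)%N /\ ~ rA (a i *: d).
  apply: NNPP => H; apply: nd.
  have -> : d = \sum_(i < n) a i *: d + (1 - \sum_(i < n) a i) *: d.
    by rewrite -scaler_suml -scalerDl addrC subrK scale1r.
  rewrite (Hd _ Har) addr0; apply: smSum => // k _.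
  by apply: NNPP => nk; apply: H; exists k.
pose y := a i *: d.
have [Kmax Kj] := HK Hi.
have Wsimp : forall W : C -> Prop, submod W -> (forall x, W x -> cyc y x) ->
    (forall x, W x -> x = 0) \/ (forall x, cyc y x -> W x).
  move=> W sW WL.
  pose T := fun l : L => W (l *: y).
  have lT : left_ideal T.
    split; rewrite /T; first by rewrite scale0r; exact: sm0.
    + by move=> u v Hu Hv; rewrite scalerDl; apply: smD.
    + by move=> b u Hu; rewrite -scalerA; apply: smZ.
  have KT : forall l, K i l -> T l.
    move=> l Kl; rewrite /T /y scalerA Hd; first exact: sm0.
    exact: jrad_radA (Kj _ Kl).
  have [_ _ Kmm] := Kmax.
  case: (Kmm T lT KT) => [H|H].
    left => x Wx; have [l El] := WL x Wx.
    have Tl : T l by rewrite /T -El.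
    by rewrite El /y scalerA Hd //; apply: jrad_radA; apply: Kj; apply: H.
  by right => x [l ->]; apply: smZ => //; move: H; rewrite /T scale1r.
have yR0 : forall x, cyc y x -> rA x -> x = 0.
  pose W := fun x => cyc y x /\ rA x.
  have sW : submod W.
    split; first by split; [exact: sm0 (sm_cyc y) | exact: sm0].
    move=> b u v [Hu Ru] [Hv Rv]; split.
      exact: (smD (sm_cyc y) (smZ b (sm_cyc y) Hu) Hv).
    exact: (smD sR (smZ b sR Ru) Rv).
  case: (Wsimp W sW (fun x (Wx : W x) => proj1 Wx)) => [H|H].
    by move=> x Lx Rx; apply: H.
  by exfalso; apply: ny; have [] := H y; [exists 1; rewrite scale1r|].
pose P := psum (@rA L C) (cyc y).
have sP : submod P := sm_psum sR (sm_cyc y).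
pose ts := flatten [seq [seq a k *: g0 | k <- iota 0 n] | g0 <- g].
have rts : forall t, t \in ts -> rs (@rA L C) t.
  move=> t /flatten_mapP [g0 _ /mapP [k]]; rewrite mem_iota add0n => /andP [_ Hk] ->.
  have [Kmk Kjk] := HK Hk.
  exists (K k); split => // l Kl; rewrite scalerA; apply: rA1.
  exact: jrad_radA (Kjk _ Kl).
have [Q [sQ NQ PQ covl]] := complement sR sP (fun z Nz => psumL (sm_cyc y) Nz) rts.
have sPQ := sm_psum sP sQ.
have cov : forall x, psum P Q x.
  move=> x; have [c ->] := Hg x.
  apply: (big_ind (psum P Q)); [exact: sm0 sPQ | by move=> u v; apply: smD | ].
  move=> j _; apply: smZ => //.
  have -> : g`_j = \sum_(k < n) a k *: g`_j + (1 - \sum_(k < n) a k) *: g`_j.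
    by rewrite -scaler_suml -scalerDl addrC subrK scale1r.
  apply: smD => //.
    apply: covl; apply: smSum; first exact: sm_lspan.
    move=> k _; apply: lspan_mem; apply/flatten_mapP; exists g`_j; first exact: mem_nth.
    by apply/mapP; exists (nat_of_ord k) => //; rewrite mem_iota add0n ltn_ord.
  by apply: (psumL sQ); apply: (psumL (sm_cyc y)); apply: rA1.
apply: nss; exists (cyc y), Q; split => //.
- exact: sm_cyc.
- split.
    move=> x; have [p [q [Pp Qq ->]]] := cov x.
    move: Pp => [r [u [Rr Lu ->]]]; exists u, (r + q); split => //.
      by apply: smD => //; apply: NQ.
    by rewrite addrAC addrC addrA.
  move=> x Lx Qx; apply: yR0 => //; apply: PQ => //; exact: psumR.
- split; first exact: sm_cyc.
    exists y; split; first by exists 1; rewrite scale1r.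
    by move=> y0; apply: ny; rewrite -/y y0; exact: sm0.
  by move=> W sW WL; apply: Wsimp.
Qed.

End Pairs.

End Gen.

Lemma kill_simple (L : nzRingType) (S : lmodType L) : modA S -> simple_mod S ->
  forall j (s : S), radA j -> j *: s = 0.
Proof.
move=> [_ socS] [_ _ Ssimp] j s Hj.
case: (classic (s = 0)) => [->|nz]; first by rewrite scaler0.
pose Ia := fun l : L => l *: s = 0.
apply: (Hj Ia); last by move=> x Hx; apply: socS.
split.
- split; rewrite /Ia; first by rewrite scale0r.
  + by move=> x y Hx Hy; rewrite scalerDl Hx Hy addr0.
  + by move=> b x Hx; rewrite -scalerA Hx scaler0.
- by rewrite /Ia scale1r.
- move=> J lJ IJ.
  pose W := fun x : S => exists l, J l /\ x = l *: s.
  have sW : submod W.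
    split; first by exists 0; split; [exact: li0 lJ | rewrite scale0r].
    move=> b _ _ [l [Jl ->]] [l' [Jl' ->]]; exists (b * l + l'); split.
      by apply: (liD lJ) => //; apply: (liM _ lJ).
    by rewrite scalerDl scalerA.
  case: (Ssimp W sW (fun _ _ => I)) => [H|H].
    by left => x Jx; apply: H; exists x.
  right; have [l [Jl El]] := H s I.
  have I1 : Ia (1 - l) by rewrite /Ia scalerBl scale1r -El subrr.
  by have := liD lJ (IJ _ I1) Jl; rewrite subrK.
Qed.

Theorem lemma3p1 (L : nzRingType)
  (hart : artin_algebra L) (hsi : selfinjective L)
  (hinf : inf_rep_type L) (hrad3 : rad3_zero L)
  (C B S : lmodType L) (alpha : C -> B) (beta : B -> S) :
  modA C -> modA B -> modA S ->
  ses alpha beta ->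
  simple_mod S ->
  ~ has_simple_summand C ->
  F_seq_exact alpha beta.
Proof.
move=> mC mB mS [la lb ia sb kb] sS nss.
have [n [a [K [HK Ha]]]] := pairs hart.
have kS := kill_simple mS sS.
have rAS0 : forall s : S, rA s -> s = 0.
  move=> _ [s [-> Hs]]; apply: big1_seq => p /andP [_ Hp]; apply: kS; exact: Hs.
have ba : forall c, beta (alpha c) = 0 by move=> c; apply/(kb (alpha c)); exists c.
have sRC := sm_rA C.
have KEY : forall c, rA (alpha c) -> rA c.
  move=> c Hc.
  have [_ [x0 [_ nx0]] _] := sS.
  have [b0 Eb0] := sb x0.
  have dec : forall y, exists l c', y = l *: b0 + alpha c'.
    move=> y; have [_ _ Ssimp] := sS.
    case: (Ssimp (cyc (beta b0)) (sm_cyc _) (fun _ _ => I)) => [H|H].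
      by exfalso; apply: nx0; rewrite -Eb0; apply: H; exists 1; rewrite scale1r.
    have [l El] := H (beta y) I.
    have : beta (y - l *: b0) = 0 by rewrite (linB _ _ lb) (linZ _ _ lb) -El subrr.
    move=> /kb [c' Ec']; exists l, c'; by rewrite -Ec' addrC subrK.
  have aux : forall s : seq (L * B), (forall p, p \in s -> radA p.1) ->
      exists z c1, [/\ rA c1, forall j, radA j -> j *: z = 0 &
        \sum_(p <- s) p.1 *: p.2 = z + alpha c1].
    elim=> [|[j y] s IH] Hs.
      exists 0, 0; split; [exact: sm0 | by move=> *; rewrite scaler0 | by rewrite big_nil (lin0 la) addr0].
    have [z [c1 [Rc1 Hz Es]]] := IH (fun p Hp => Hs p (mem_behead (s := (j, y) :: s) Hp)).
    have Hj : radA j by have := Hs (j, y); rewrite inE eqxx; apply.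
    have [l [c' ->]] := dec y.
    exists (j *: (l *: b0) + z), (j *: c' + c1); split.
    - by apply: smD => //; apply: rA1.
    - move=> k Hk; rewrite scalerDr Hz // addr0; apply: (factA HK Ha hrad3) => //.
      by move: mB => [_ socB].
    - rewrite big_cons /= Es (linD _ _ la) (linZ _ _ la) scalerDr.
      by rewrite addrACA.
  move: Hc => [s [Es Hs]].
  have [z [c1 [Rc1 Hz Ez]]] := aux s Hs.
  have Ad : alpha (c - c1) = z by rewrite (linB _ _ la) Es Ez addrK.
  have Hd : forall j, radA j -> j *: (c - c1) = 0.
    move=> j Hj; apply: ia; rewrite (linZ _ _ la) Ad Hz // (lin0 la) //.
  have := N3 HK Ha mC nss Hd.
  by move=> Rd; have := smD sRC Rd Rc1; rewrite subrK.
split; split.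
- exact: KEY.
- move=> y; split.
    move=> /rAS0 /kb [c ->]; exists c; rewrite subrr; exact: sm0 (sm_rA B).
  move=> [c Hc]; have := rA_lin lb Hc; rewrite (linB _ _ lb) ba subr0; done.
- by move=> s; have [y Ey] := sb s; exists y; rewrite Ey subrr; exact: sm0 (sm_rA S).
- by split => ? H; [apply: rA_lin la H | apply: rA_lin lb H].
- by move=> c _ H; apply: ia; rewrite H (lin0 la).
- move=> y Ry; split.
    by move=> /kb [c Ec]; exists c; split => //; apply: KEY; rewrite -Ec.
  by move=> [c [_ <-]]; apply: ba.
- by move=> s /rAS0 ->; exists 0; split; [exact: sm0 (sm_rA B) | exact: lin0 lb].
Qed.
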